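(* Let $R$ be a commutative ring which is free as an abelian group, with $\mathbb{Z}$-basis $V=\{v_k\}_{k\in I}$ (the rank may be infinite), let $n\ge 2$ and let $p$ be a prime. For $r\ge 1$ let $\Gamma_r=\Gamma(SL_n(R),p^r)=\ker\big(SL_n(R)\to SL_n(R\otimes_{\mathbb{Z}}\mathbb{Z}/p^r)\big)$. Let $\mathfrak{g}=\mathfrak{sl}_n(\mathbb{F}_p[V])$ and let $\mathfrak{L}$ be the kernel of the evaluation map $\mathfrak{g}\otimes_{\mathbb{F}_p}\mathbb{F}_p[t]\xrightarrow{t=0}\mathfrak{g}$, i.e. $\mathfrak{L}=\mathfrak{g}\otimes_{\mathbb{F}_p} t\mathbb{F}_p[t]$. Then $\mathfrak{L}\cong \mathrm{gr}_*(\Gamma(SL_n(R),p))$ as Lie algebras over $\mathbb{F}_p$.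
   Context: $\mathbb{F}_p[V]$ denotes $R\otimes_{\mathbb{Z}}\mathbb{Z}/p=R/pR$, a commutative $\mathbb{F}_p$-algebra whose underlying vector space is free on (the image of) $V$. $\mathfrak{sl}_n(\mathbb{F}_p[V])$ is the Lie algebra of traceless $n\times n$ matrices over $R/pR$ with bracket $[A,B]=AB-BA$. $\mathfrak{g}\otimes_{\mathbb{F}_p}\mathbb{F}_p[t]$ has bracket $[A\otimes t^i,B\otimes t^j]=(AB-BA)\otimes t^{i+j}$. The filtration $\cdots\subseteq\Gamma_{r+1}\subseteq\Gamma_r\subseteq\cdots\subseteq\Gamma_1$ satisfies $[\Gamma_r,\Gamma_s]\subseteq\Gamma_{r+s}$ (group commutator $[g,h]=g^{-1}h^{-1}gh$), and each $\Gamma_r/\Gamma_{r+1}$ is an elementary abelian $p$-group, regarded as an $\mathbb{F}_p$-vector space. $\mathrm{gr}_*(\Gamma(SL_n(R),p))=\bigoplus_{r\ge1}\Gamma_r/\Gamma_{r+1}$, with Lie bracket obtained by extending bilinearly the maps $\Gamma_r/\Gamma_{r+1}\times\Gamma_s/\Gamma_{s+1}\to\Gamma_{r+s}/\Gamma_{r+s+1}$ induced by the group commutator. *)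

(* Defs.v *)
From HB Require Import structures.
From mathcomp Require Import all_boot all_order all_algebra.
Set Implicit Arguments.
Unset Strict Implicit.
Unset Printing Implicit Defensive.
Import GRing.Theory.
Local Open Scope ring_scope.

Definition congr_mod (R : comPzRingType) (m x y : R) : Prop :=
  exists z : R, x - y = m * z.

Definition Z_basis (R : comPzRingType) (I : eqType) (v : I -> R) : Prop :=
  (forall (s : seq I) (c : I -> int), uniq s ->
      \sum_(i <- s) (v i *~ c i) = 0 -> forall i, i \in s -> c i = 0)
  /\ (forall x : R, exists (s : seq I) (c : I -> int),
        x = \sum_(i <- s) (v i *~ c i)).

Definition in_Gamma (R : comPzRingType) (n p r : nat) (A : 'M[R]_n) : Prop :=
  \det A = 1 /\
  forall i j, congr_mod (p ^ r)%:R (A i j) ((1%:M : 'M[R]_n) i j).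

(* Group inverse in SL_n(R): for det A = 1 the adjugate is the inverse. *)
Definition sl_inv (R : comPzRingType) (n : nat) (A : 'M[R]_n) : 'M[R]_n :=
  \adj A.

Definition gcomm (R : comPzRingType) (n : nat) (g h : 'M[R]_n) : 'M[R]_n :=
  sl_inv g *m sl_inv h *m g *m h.

(* ---------- gr_*(Gamma(SL_n(R),p)) = (+)_{r>=1} Gamma_r/Gamma_{r+1} ----------
   An element is represented by a family a : nat -> 'M[R]_n with a r in Gamma_r
   for every r >= 1 (the class of a r in Gamma_r/Gamma_{r+1} is the degree-r
   component), almost all components trivial (a r in Gamma_{r+1});
   index 0 is unused. *)
Definition gr_elt (R : comPzRingType) (n p : nat) (a : nat -> 'M[R]_n) : Prop :=
  (forall r, (0 < r)%N -> in_Gamma p r (a r)) /\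
  exists N, forall r, (N <= r)%N -> in_Gamma p r.+1 (a r).

Definition gr_eq (R : comPzRingType) (n p : nat) (a b : nat -> 'M[R]_n) : Prop :=
  forall r, (0 < r)%N -> in_Gamma p r.+1 (sl_inv (a r) *m b r).

Definition gr_add (R : comPzRingType) (n : nat) (a b : nat -> 'M[R]_n) :
  nat -> 'M[R]_n := fun r => a r *m b r.

(* Lie bracket in gr_*: bilinear extension of the maps induced by the group
   commutator Gamma_i/Gamma_{i+1} x Gamma_j/Gamma_{j+1} -> Gamma_{i+j}/Gamma_{i+j+1};
   degree-r component = sum_{i+j=r, i,j>=1} [a_i, b_j]. *)
Definition gr_bracket (R : comPzRingType) (n : nat) (a b : nat -> 'M[R]_n) :
  nat -> 'M[R]_n :=
  fun r => \big[mulmx/1%:M]_(1 <= i < r) gcomm (a i) (b (r - i)%N).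

(* ---------- L = sl_n(F_p[V]) (x) t F_p[t], with F_p[V] = R / pR ----------
   An element is represented by a family X : nat -> 'M[R]_n, X r being a lift
   to R of the coefficient of t^r (a matrix over R/pR); the coefficients are
   traceless over R/pR, the t^0 coefficient vanishes, almost all vanish. *)
Definition mx_congr_p (R : comPzRingType) (n p : nat) (X Y : 'M[R]_n) : Prop :=
  forall i j, congr_mod p%:R (X i j) (Y i j).

Definition L_elt (R : comPzRingType) (n p : nat) (X : nat -> 'M[R]_n) : Prop :=
  mx_congr_p p (X 0%N) 0 /\
  (forall r, congr_mod p%:R (\tr (X r)) 0) /\
  exists N, forall r, (N <= r)%N -> mx_congr_p p (X r) 0.

Definition L_eq (R : comPzRingType) (n p : nat) (X Y : nat -> 'M[R]_n) : Prop :=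
  forall r, mx_congr_p p (X r) (Y r).

Definition L_add (R : comPzRingType) (n : nat) (X Y : nat -> 'M[R]_n) :
  nat -> 'M[R]_n := fun r => X r + Y r.

(* [A (x) t^i, B (x) t^j] = (AB - BA) (x) t^(i+j) *)
Definition L_bracket (R : comPzRingType) (n : nat) (X Y : nat -> 'M[R]_n) :
  nat -> 'M[R]_n :=
  fun r => \sum_(0 <= i < r.+1) (X i *m Y (r - i)%N - Y (r - i)%N *m X i).

(* phi (acting on representatives) induces an isomorphism of Lie algebras over
   F_p from L onto gr_*(Gamma(SL_n(R),p)): well defined, additive (hence
   F_p-linear), compatible with brackets, injective and surjective. *)
Definition Lie_iso_L_gr (R : comPzRingType) (n p : nat)
    (phi : (nat -> 'M[R]_n) -> (nat -> 'M[R]_n)) : Prop :=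
  (forall X, L_elt p X -> gr_elt p (phi X)) /\
  (forall X Y, L_elt p X -> L_elt p Y -> L_eq p X Y -> gr_eq p (phi X) (phi Y)) /\
  (forall X Y, L_elt p X -> L_elt p Y ->
     gr_eq p (phi (L_add X Y)) (gr_add (phi X) (phi Y))) /\
  (forall X Y, L_elt p X -> L_elt p Y ->
     gr_eq p (phi (L_bracket X Y)) (gr_bracket (phi X) (phi Y))) /\
  (forall X Y, L_elt p X -> L_elt p Y -> gr_eq p (phi X) (phi Y) -> L_eq p X Y) /\
  (forall a, gr_elt p a -> exists X, L_elt p X /\ gr_eq p (phi X) a).

(* Main.v *)
From HB Require Import structures.
From mathcomp Require Import all_boot all_order all_algebra.
Require Import Defs.
From Stdlib Require Import ClassicalEpsilon.
From mathcomp Require Import ring.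
From mathcomp Require Import fingroup perm.
Set Implicit Arguments. Unset Strict Implicit. Unset Printing Implicit Defensive.
Import GRing.Theory.
Local Open Scope ring_scope.

Lemma iter_addE (R : comPzRingType) (x : R) k : iter k (+%R x) 0 = x *+ k.
Proof. by elim: k => //= k ->; rewrite mulrS. Qed.

Lemma torsion_free (R : comPzRingType) (I : eqType) (v : I -> R) (p : nat) :
  Z_basis v -> (0 < p)%N -> forall x : R, p%:R * x = 0 -> x = 0.
Proof.
move=> [ind span] p0 x px.
have [s [c Hx]] := span x.
set c' := fun i => c i * (count_mem i s)%:Z.
have E : forall i, iterop (count_mem i s) +%R (v i *~ c i) 0 = v i *~ c' i.
  by move=> i; rewrite Monoid.iteropE iter_addE /c' pmulrn mulrzA.
have Hs : \sum_(i <- s) v i *~ c i = \sum_(i <- undup s) v i *~ c' i.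
  rewrite -(big_undup_iterop_count _ _ predT) /=; apply: eq_bigr => i _; exact: E.
rewrite Hx Hs in px *.
have H1 : \sum_(i <- undup s) v i *~ (c' i *~ p) = 0.
  rewrite -[RHS]px mulr_sumr; apply: eq_bigr => i _.
  by rewrite mulrzz mulrzA -pmulrn mulr_natl.
have H0 : forall i, i \in undup s -> c' i = 0.
  move=> i Hi; have := ind (undup s) (fun i => c' i *~ p) (undup_uniq s) H1 i Hi.
  move/eqP; rewrite mulrzz mulf_eq0 => /orP [/eqP //|]; by case: p p0 {px H1}.
rewrite big_seq big1 // => i /H0 ->; exact: mulr0z.
Qed.
Section Mxc.
Variables (R : comPzRingType) (n : nat).
Implicit Types (A B C D M : 'M[R]_n) (m k : R).

Definition mxc m A B := exists C, A - B = m *: C.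

Lemma mxc_refl m A : mxc m A A.
Proof. by exists 0; rewrite subrr scaler0. Qed.

Lemma mxc_sym m A B : mxc m A B -> mxc m B A.
Proof. by case=> C HC; exists (- C); rewrite scalerN -HC opprB. Qed.

Lemma mxc_trans m A B D : mxc m A B -> mxc m B D -> mxc m A D.
Proof.
case=> C HC [E HE]; exists (C + E); rewrite scalerDr -HC -HE.
by rewrite addrA subrK.
Qed.

Lemma mxc_add m A B A' B' : mxc m A B -> mxc m A' B' -> mxc m (A + A') (B + B').
Proof.
case=> C HC [E HE]; exists (C + E); rewrite scalerDr -HC -HE.
by rewrite opprD addrACA.
Qed.

Lemma mxc_opp m A B : mxc m A B -> mxc m (- A) (- B).
Proof. by case=> C HC; exists (- C); rewrite scalerN -HC opprB opprK addrC. Qed.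

Lemma mxc_mull m M A B : mxc m A B -> mxc m (M *m A) (M *m B).
Proof. by case=> C HC; exists (M *m C); rewrite -mulmxBr HC scalemxAr. Qed.

Lemma mxc_mulr m M A B : mxc m A B -> mxc m (A *m M) (B *m M).
Proof. by case=> C HC; exists (C *m M); rewrite -mulmxBl HC scalemxAl. Qed.

Lemma mxc_mul m A B A' B' : mxc m A B -> mxc m A' B' -> mxc m (A *m A') (B *m B').
Proof.
move=> H1 H2; apply: mxc_trans (mxc_mulr _ H1) _; exact: mxc_mull.
Qed.

Lemma mxc_scale m k A B : mxc m A B -> mxc (k * m) (k *: A) (k *: B).
Proof. by case=> C HC; exists C; rewrite -scalerBr HC scalerA. Qed.

Lemma mxc_dvd m k A B : mxc (m * k) A B -> mxc m A B.
Proof. by case=> C HC; exists (k *: C); rewrite HC scalerA. Qed.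

Lemma mxc_dvdl m k A B : mxc (k * m) A B -> mxc m A B.
Proof. by rewrite mulrC; apply: mxc_dvd. Qed.

Lemma mxc_mult m C : mxc m (m *: C) 0.
Proof. by exists C; rewrite subr0. Qed.

Lemma mxc_addl m A B C : mxc m C 0 -> mxc m A B -> mxc m (A + C) B.
Proof. by move=> H1 H2; rewrite -[B]addr0; apply: mxc_add. Qed.

Lemma mxcP m A B : (forall i j, congr_mod m (A i j) (B i j)) <-> mxc m A B.
Proof.
split=> [H|[C HC] i j].
  pose C := \matrix_(i, j) epsilon (inhabits 0) (fun z => A i j - B i j = m * z).
  exists C; apply/matrixP => i j; rewrite !mxE.
  exact: (epsilon_spec (inhabits 0) (fun z => A i j - B i j = m * z) (H i j)).
by exists (C i j); have := congr1 (fun M => M i j) HC; rewrite !mxE.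
Qed.

End Mxc.

Section Lev.
Variables (R : comPzRingType) (n p : nat).
Implicit Types (A B C D M X Y : 'M[R]_n).

Definition q k : R := (p ^ k)%:R.
Lemma qS k : q k.+1 = q k * p%:R.
Proof. by rewrite /q expnSr natrM. Qed.
Lemma qD i j : q (i + j) = q i * q j.
Proof. by rewrite /q expnD natrM. Qed.

Definition lev r A X := mxc (q r.+1) A (1%:M + q r *: X).

Lemma expand1 (a b : R) X Y :
  (1%:M + a *: X) *m (1%:M + b *: Y) = 1%:M + a *: X + b *: Y + (a * b) *: (X *m Y).
Proof.
rewrite mulmxDl !mulmxDr !mul1mx !mulmx1 -scalemxAl -scalemxAr scalerA.
by rewrite !addrA (addrAC 1%:M).
Qed.

Lemma lev_mul r A B X Y : (0 < r)%N -> lev r A X -> lev r B Y -> lev r (A *m B) (X + Y).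
Proof.
move=> r0 HA HB; apply: mxc_trans (mxc_mul HA HB) _.
rewrite expand1 scalerDr addrA.
apply: mxc_addl; last exact: mxc_refl.
have -> : q r * q r = q r.+1 * q r.-1 by rewrite -!qD; congr q; rewrite addSn -addnS (ltn_predK r0).
rewrite -scalerA; exact: mxc_mult.
Qed.

Lemma lev_congr r A X X' : mxc p%:R X X' -> lev r A X -> lev r A X'.
Proof.
move=> HX HA; apply: mxc_trans HA _; apply: mxc_add; first exact: mxc_refl.
rewrite qS; exact: mxc_scale.
Qed.

Lemma lev_one r : lev r 1%:M 0.
Proof. rewrite /lev scaler0 addr0; exact: mxc_refl. Qed.

Lemma lev_eq r A X : lev r (1%:M + q r *: X) X.
Proof. exact: mxc_refl. Qed.

Lemma lev_exact r A X : lev r A X -> exists X', A = 1%:M + q r *: X' /\ mxc p%:R X' X.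
Proof.
case=> C HC; exists (X + p%:R *: C); split.
  by rewrite scalerDr scalerA -qS -HC addrA addrC subrK.
by exists C; rewrite addrC addKr.
Qed.

Lemma lev_gamma r A X : lev r A X -> mxc (q r) A 1%:M.
Proof.
move=> /lev_exact [X' [-> _]]; rewrite -{2}[1%:M]addr0.
apply: mxc_add; [exact: mxc_refl | exact: mxc_mult].
Qed.

Lemma lev_zero r A X : mxc p%:R X 0 -> lev r A X -> mxc (q r.+1) A 1%:M.
Proof. by move=> H0 /(lev_congr H0); rewrite /lev scaler0 addr0. Qed.

Lemma adj1 A : \det A = 1 -> \adj A *m A = 1%:M /\ A *m \adj A = 1%:M.
Proof. by move=> dA; rewrite mul_adj_mx mul_mx_adj dA. Qed.

Lemma det_adj1 A : \det A = 1 -> \det (\adj A) = 1.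
Proof.
move=> dA; have := congr1 determinant (adj1 dA).1.
by rewrite det_mulmx dA mulr1 det1.
Qed.

Lemma adj_cong m A : \det A = 1 -> mxc m A 1%:M -> mxc m (\adj A) 1%:M.
Proof.
move=> dA H; apply: mxc_sym; have := mxc_mull (\adj A) H.
by rewrite (adj1 dA).1 mulmx1.
Qed.

Lemma key_gamma r A B : \det A = 1 -> \det B = 1 ->
  (in_Gamma p r (\adj A *m B) <-> mxc (q r) A B).
Proof.
move=> dA dB; split.
  case=> _ /mxcP H; apply: mxc_sym; have := mxc_mull A H.
  by rewrite mulmxA (adj1 dA).2 mul1mx mulmx1.
move=> H; split; first by rewrite det_mulmx det_adj1 // dB mulr1.
apply/mxcP; have := mxc_mull (\adj A) (mxc_sym H).
by rewrite (adj1 dA).1.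
Qed.

Lemma q_p r : (0 < r)%N -> q r = p%:R * q r.-1.
Proof. by move=> r0; rewrite -{1}(ltn_predK r0) -add1n qD /q expn1. Qed.

Lemma lev_p r A X : (0 < r)%N -> lev r A X -> mxc p%:R A 1%:M.
Proof. move=> r0 /lev_gamma; rewrite q_p //; exact: mxc_dvd. Qed.

Lemma comm_expand (a b : R) X Y :
  (1%:M + a *: X) *m (1%:M + b *: Y) =
  (1%:M + b *: Y) *m (1%:M + a *: X) + (a * b) *: (X *m Y - Y *m X).
Proof.
rewrite !expand1 scalerBr (mulrC b a).
have h : forall (u c d : 'M[R]_n), u + c + (d - c) = u + d.
  by move=> u c d; rewrite -addrA (addrC c) subrK.
by rewrite h -!addrA (addrCA (a *: X)).
Qed.

Lemma lev_comm i j A B X Y : (0 < i)%N -> (0 < j)%N ->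
  \det A = 1 -> \det B = 1 -> lev i A X -> lev j B Y ->
  lev (i + j) (gcomm A B) (X *m Y - Y *m X).
Proof.
move=> i0 j0 dA dB HA HB.
have GA := adj_cong dA (lev_p i0 HA).
have GB := adj_cong dB (lev_p j0 HB).
have [X' [EA HX]] := lev_exact HA; have [Y' [EB HY]] := lev_exact HB.
apply: (lev_congr (X := X' *m Y' - Y' *m X')).
  apply: mxc_add; [exact: mxc_mul | apply: mxc_opp; exact: mxc_mul].
have E : gcomm A B = 1%:M + (q i * q j) *: ((\adj A *m \adj B) *m (X' *m Y' - Y' *m X')).
  have AB : A *m B = B *m A + (q i * q j) *: (X' *m Y' - Y' *m X').
    by rewrite EA EB comm_expand.
  rewrite /gcomm /sl_inv -!mulmxA AB !mulmxDr -!scalemxAr !mulmxA; congr (_ + _).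
    by rewrite -(mulmxA (\adj A)) (adj1 dB).1 mulmx1 (adj1 dA).1.
  by rewrite mulmxDr !mulmxA.
rewrite E /lev -qD; apply: mxc_add; first exact: mxc_refl.
rewrite qS; apply: mxc_scale.
rewrite -{2}(mul1mx (_ - _)); apply: mxc_mulr.
rewrite -(mul1mx 1%:M); exact: mxc_mul.
Qed.

End Lev.

Section Det.
Variables (R : comPzRingType) (n : nat).
Implicit Types (A B C D M X Y : 'M[R]_n).

Lemma det_elem_lt (i j : 'I_n) (c : R) : (j < i)%N -> \det (1%:M + c *: delta_mx i j) = 1.
Proof.
move=> ji; rewrite det_trig; last first.
  apply/is_trig_mxP => k l kl; rewrite !mxE; have -> : (k == l) = false by apply/eqP => e; move: kl; rewrite e ltnn.
  rewrite add0r.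
  case: (k =P i) => [ki|] /=; last by rewrite mulr0.
  case: (l =P j) => [lj|] /=; last by rewrite mulr0.
  by move: kl; rewrite ki lj ltnNge ltnW.
rewrite big1 // => k _; rewrite !mxE eqxx.
case: (k =P i) => [ki|] /=; last by rewrite mulr0 addr0.
case: (k =P j) => [kj|] /=; last by rewrite mulr0 addr0.
by move: ji; rewrite -ki -kj ltnn.
Qed.

Lemma det_elem (i j : 'I_n) (c : R) : i != j -> \det (1%:M + c *: delta_mx i j) = 1.
Proof.
rewrite neq_ltn => /orP [ij|]; last exact: det_elem_lt.
rewrite -det_tr linearD /= linearZ /= trmx_delta tr_scalar_mx; exact: det_elem_lt.
Qed.

Definition dvr (m x : R) := exists z, x = m * z.

Lemma prod_1p (I : Type) (s : seq I) (a : R) (f : I -> R) :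
  exists z, \prod_(i <- s) (1 + a * f i) = 1 + a * \sum_(i <- s) f i + a * a * z.
Proof.
elim: s => [|x s [z IH]]; first by exists 0; rewrite !big_nil; ring.
exists (f x * \sum_(i <- s) f i + z + a * f x * z).
rewrite !big_cons IH; ring.
Qed.

Lemma dvr_sum (m : R) (I : Type) (s : seq I) (P : pred I) (F : I -> R) :
  (forall i, P i -> dvr m (F i)) -> dvr m (\sum_(i <- s | P i) F i).
Proof.
move=> H; apply: (big_ind (dvr m)); first by exists 0; rewrite mulr0.
  by move=> x y [z1 ->] [z2 ->]; exists (z1 + z2); rewrite mulrDr.
exact: H.
Qed.

Lemma det_1p (a : R) C : exists z, \det (1%:M + a *: C) = 1 + a * \tr C + a * a * z.
Proof.
set M := 1%:M + a *: C.
have [z Hz] := prod_1p (index_enum 'I_n) a (fun i => C i i).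
have Hd : dvr (a * a) (\sum_(s : 'S_n | s != 1%g) (-1) ^+ s * \prod_i M i (s i)).
  apply: dvr_sum => s s1.
  have [i si] : exists i, s i != i.
    apply/existsP; apply: contraR s1 => /existsPn H; apply/eqP/permP => k.
    by rewrite perm1; apply/eqP; move: (H k); rewrite negbK.
  set j := s i.
  have sj : s j != j by apply: contra si => /eqP e; apply/eqP; exact: (perm_inj e).
  have ij : i != j by rewrite eq_sym.
  rewrite (bigD1 i) //= (bigD1 j) //=.
  have off k : s k != k -> M k (s k) = a * C k (s k).
    by move=> sk; rewrite !mxE eq_sym (negbTE sk) add0r.
  rewrite off // off //.
  set P := \prod_(_ < _ | _) _; set u := C i (s i); set w := C j (s j); set e := (-1) ^+ s.
  by exists (e * u * w * P); ring.
case: Hd => w Hw.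
exists (z + w); rewrite /determinant (bigD1 1%g) //= Hw odd_perm1 expr0 mul1r.
have -> : \prod_i M i ((1%g : 'S_n) i) = \prod_(i <- index_enum 'I_n) (1 + a * C i i).
  by rewrite /index_enum; apply: eq_bigr => i _; rewrite perm1 !mxE eqxx.
by rewrite Hz /mxtrace; ring.
Qed.

End Det.

Section Exist.
Variables (R : comPzRingType) (n p : nat).
Implicit Types (A B C D M X Y : 'M[R]_n).

Definition S r X := exists A, \det A = 1 /\ lev p r A X.

Lemma S_add r X Y : (0 < r)%N -> S r X -> S r Y -> S r (X + Y).
Proof.
move=> r0 [A [dA HA]] [B [dB HB]]; exists (A *m B); split.
  by rewrite det_mulmx dA dB mulr1.
exact: lev_mul.
Qed.

Lemma S_congr r X Y : mxc p%:R X Y -> S r X -> S r Y.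
Proof. by move=> H [A [dA HA]]; exists A; split => //; apply: lev_congr H HA. Qed.

Lemma S_eq r X Y : X = Y -> S r X -> S r Y.
Proof. by move=> ->. Qed.

Lemma S_zero r : S r 0.
Proof. by exists 1%:M; split; [exact: det1 | exact: lev_one]. Qed.

Lemma S_elem r (i j : 'I_n) (c : R) : i != j -> S r (c *: delta_mx i j).
Proof.
move=> ij; exists (1%:M + q R p r *: (c *: delta_mx i j)); split; last exact: mxc_refl.
by rewrite scalerA det_elem.
Qed.

Lemma S_conj r X T T' : \det T = 1 -> T *m T' = 1%:M -> S r X -> S r (T *m X *m T').
Proof.
move=> dT TT' [A [dA HA]]; exists (T *m A *m T'); split.
  have dT' : \det T' = 1.
    by have := congr1 determinant TT'; rewrite det_mulmx dT mul1r det1.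
  by rewrite !det_mulmx dT dA dT' !mulr1.
apply: mxc_trans (mxc_mulr _ (mxc_mull _ HA)) _.
rewrite mulmxDr mulmxDl mulmx1 TT' -scalemxAr -scalemxAl; exact: mxc_refl.
Qed.

Lemma S_diag r (i j : 'I_n) (c : R) : (0 < r)%N -> i != j ->
  S r (c *: (delta_mx j j - delta_mx i i)).
Proof.
move=> r0 ij.
have ji : j != i by rewrite eq_sym.
have H1 := S_conj (T := 1%:M + 1 *: delta_mx j i) (T' := 1%:M + (-1) *: delta_mx j i)
   (det_elem 1 ji) _ (S_elem r c ij).
have H2 : S r (c *: (delta_mx i j + delta_mx j j - delta_mx i i - delta_mx j i)).
  apply: S_eq (H1 _); last first.
    by rewrite expand1 mul_delta_mx_0 // scaler0 addr0 scaleN1r scale1r addrK.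
  rewrite scale1r scaleN1r mulmxDl mul1mx -scalemxAr mul_delta_mx.
  rewrite mulmxDr mulmx1 mulmxN mulmxDl -!scalemxAl !mul_delta_mx.
  by rewrite !scalerDr !scalerN opprD !addrA.
have H3 := S_add r0 (S_add r0 H2 (S_elem r c ji)) (S_elem r (- c) ij).
apply: S_eq H3; rewrite scaleNr -scalerDr -scalerBr; congr (_ *: _).
rewrite (addrC (delta_mx i j)) -!addrA; congr (_ + _).
by rewrite addKr addrCA subrr addr0.
Qed.

Lemma S_all r (i0 : 'I_n) X : (0 < r)%N -> congr_mod p%:R (\tr X) 0 -> S r X.
Proof.
move=> r0 [t Ht]; rewrite subr0 in Ht.
pose F (i j : 'I_n) := X i j *: (delta_mx i j - (i == j)%:R *: delta_mx i0 i0).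
have E : X - (\tr X) *: delta_mx i0 i0 = \sum_i \sum_j F i j.
  rewrite {1}(matrix_sum_delta X) /F /mxtrace scaler_suml -sumrB; apply: eq_bigr => i _.
  rewrite (bigD1 i) //= [in RHS](bigD1 i) //= eqxx scale1r addrAC scalerBr; congr (_ + _).
  apply: eq_bigr => j ji.
  by rewrite eq_sym (negbTE ji) scale0r subr0.
apply: (S_congr (X := X - (\tr X) *: delta_mx i0 i0)).
  by exists (- (t *: delta_mx i0 i0)); rewrite addrAC subrr add0r Ht scalerN scalerA.
rewrite E; apply: (big_ind (S r)); [exact: S_zero | by move=> ? ?; apply: S_add | move=> i _].
apply: (big_ind (S r)); [exact: S_zero | by move=> ? ?; apply: S_add | move=> j _].
rewrite /F; case: (i =P j) => [<-|/eqP ij]; last by rewrite scale0r subr0; exact: S_elem.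
rewrite scale1r; case: (i =P i0) => [->|/eqP ii0]; first by rewrite subrr scaler0; exact: S_zero.
by apply: S_diag => //; rewrite eq_sym.
Qed.
End Exist.

Section Main.
Variables (R : comPzRingType) (n p : nat).
Hypothesis tf : forall x : R, p%:R * x = 0 -> x = 0.
Implicit Types (A B C D M X Y : 'M[R]_n).
Local Notation Q := (q R p).
Local Notation lv := (@lev R n p).

Lemma tfq k (x : R) : Q k * x = 0 -> x = 0.
Proof.
elim: k x => [|k IH] x; first by rewrite /q expn0 mul1r.
by rewrite qS -mulrA => /IH /tf.
Qed.

Lemma tfq_mx k M : Q k *: M = 0 -> M = 0.
Proof.
move=> H; apply/matrixP => i j; have := congr1 (fun M => M i j) H.
by rewrite /= !mxE => /tfq.
Qed.

Lemma cancel_q r X Y : mxc (Q r.+1) (Q r *: X) (Q r *: Y) -> mxc p%:R X Y.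
Proof.
case=> C HC; exists C; apply/eqP; rewrite -subr_eq0; apply/eqP; apply: (@tfq_mx r).
by rewrite !scalerBr HC qS scalerA subrr.
Qed.

Lemma mxc_addK m A B C : mxc m (C + A) (C + B) -> mxc m A B.
Proof.
case=> D HD; exists D; rewrite -HD opprD addrACA subrr add0r //.
Qed.

Lemma trace_cond r C : (0 < r)%N -> \det (1%:M + Q r *: C) = 1 ->
  congr_mod p%:R (\tr C) 0.
Proof.
move=> r0; have [z ->] := det_1p (Q r) C => /eqP.
rewrite -addrA -subr_eq0 addrAC subrr add0r -mulrA -mulrDr => /eqP /tfq /eqP.
rewrite addr_eq0 => /eqP ->; exists (- (Q r.-1 * z)).
by rewrite subr0 (q_p R p r0) -mulrA mulrN.
Qed.

Lemma lev_gr r A B Z : \det A = 1 -> \det B = 1 -> lv r A Z -> lv r B Z ->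
  in_Gamma p r.+1 (\adj A *m B).
Proof.
move=> dA dB HA HB; apply/key_gamma => //; apply: mxc_trans HA (mxc_sym HB).
Qed.

Lemma gamma_mxc r A : in_Gamma p r A -> mxc (Q r) A 1%:M.
Proof. by case=> _ /mxcP. Qed.

Lemma mxc_gamma r A : \det A = 1 -> mxc (Q r) A 1%:M -> in_Gamma p r A.
Proof. by move=> dA /mxcP H; split. Qed.

End Main.

Definition good (R : comPzRingType) (n p r : nat) (X A : 'M[R]_n) :=
  \det A = 1 /\ @lev R n p r A X.

Definition phi (R : comPzRingType) (n p : nat) (X : nat -> 'M[R]_n) : nat -> 'M[R]_n :=
  fun r => epsilon (inhabits 1%:M) (good p r (X r)).

Section Final.
Variables (R : comPzRingType) (n p : nat).
Hypothesis tf : forall x : R, p%:R * x = 0 -> x = 0.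
Variable i0 : 'I_n.
Implicit Types (A B C D M : 'M[R]_n) (X Y : nat -> 'M[R]_n).
Local Notation Q := (q R p).
Local Notation lv := (@lev R n p).

Lemma phi_spec X r : (0 < r)%N -> congr_mod p%:R (\tr (X r)) 0 ->
  good p r (X r) (phi p X r).
Proof.
move=> r0 Ht; apply: (epsilon_spec (inhabits 1%:M) (good p r (X r))).
have [A HA] := S_all i0 r0 Ht; by exists A.
Qed.

Lemma mxc_congr_p M N : mx_congr_p p M N <-> mxc p%:R M N.
Proof. exact: mxcP. Qed.

Lemma part1 X : L_elt p X -> gr_elt p (phi p X).
Proof.
move=> [X0 [Ht [N HN]]]; split.
  move=> r r0; have [dA HA] := phi_spec r0 (Ht r).
  apply: mxc_gamma => //; exact: lev_gamma HA.
exists N.+1 => r Nr; have r0 : (0 < r)%N by apply: leq_trans Nr.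
have [dA HA] := phi_spec r0 (Ht r).
apply: mxc_gamma => //; apply: lev_zero HA; apply/mxcP; apply: HN; exact: ltnW.
Qed.

Lemma part2 X Y : L_elt p X -> L_elt p Y -> L_eq p X Y -> gr_eq p (phi p X) (phi p Y).
Proof.
move=> [_ [HtX _]] [_ [HtY _]] E r r0.
have [dA HA] := phi_spec r0 (HtX r); have [dB HB] := phi_spec r0 (HtY r).
apply: lev_gr dA dB _ HB; apply: lev_congr HA; apply/mxcP; exact: E.
Qed.

Lemma congr_add (x y : R) : congr_mod p%:R x 0 -> congr_mod p%:R y 0 -> congr_mod p%:R (x + y) 0.
Proof. by move=> [a Ha] [b Hb]; exists (a + b); move: Ha Hb; rewrite !subr0 mulrDr => -> ->. Qed.

Lemma part3 X Y : L_elt p X -> L_elt p Y ->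
  gr_eq p (phi p (L_add X Y)) (gr_add (phi p X) (phi p Y)).
Proof.
move=> [_ [HtX _]] [_ [HtY _]] r r0.
have Ht : congr_mod p%:R (\tr (L_add X Y r)) 0 by rewrite /L_add mxtraceD; exact: congr_add.
have [dA HA] := phi_spec r0 Ht.
have [dB HB] := phi_spec r0 (HtX r); have [dC HC] := phi_spec r0 (HtY r).
apply: lev_gr dA _ HA _; first by rewrite /gr_add det_mulmx dB dC mulr1.
exact: lev_mul.
Qed.

Lemma tr_comm M N : \tr (M *m N - N *m M) = 0.
Proof. by rewrite mxtraceD linearN /= mxtrace_mulC subrr. Qed.

Lemma mxc_sandwich (m : R) (U V S : 'M[R]_n) : mxc m V 0 -> mxc m U 0 -> mxc m (U + (S + V)) S.
Proof.
move=> hV hU; rewrite addrCA; apply: mxc_addl; last exact: mxc_refl.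
rewrite -[0]addr0; exact: mxc_add.
Qed.

Lemma mxc_comm0l (m : R) (A B : 'M[R]_n) : mxc m A 0 -> mxc m (A *m B - B *m A) 0.
Proof.
move=> H; rewrite -(subrr (0 : 'M[R]_n)); apply: mxc_add; last apply: mxc_opp.
  by have := mxc_mulr B H; rewrite mul0mx.
by have := mxc_mull B H; rewrite mulmx0.
Qed.

Lemma mxc_comm0r (m : R) (A B : 'M[R]_n) : mxc m B 0 -> mxc m (A *m B - B *m A) 0.
Proof.
move=> H; rewrite -(subrr (0 : 'M[R]_n)); apply: mxc_add; last apply: mxc_opp.
  by have := mxc_mull A H; rewrite mulmx0.
by have := mxc_mulr A H; rewrite mul0mx.
Qed.

Lemma det_gcomm A B : \det A = 1 -> \det B = 1 -> \det (gcomm A B) = 1.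
Proof.
move=> dA dB; by rewrite /gcomm /sl_inv !det_mulmx !det_adj1 // dA dB !mulr1.
Qed.

Lemma part4 X Y : L_elt p X -> L_elt p Y ->
  gr_eq p (phi p (L_bracket X Y)) (gr_bracket (phi p X) (phi p Y)).
Proof.
move=> [X0 [HtX _]] [Y0 [HtY _]] r r0.
have Ht : congr_mod p%:R (\tr (L_bracket X Y r)) 0.
  exists 0; rewrite mulr0 subr0 /L_bracket.
  apply: (big_ind (fun M : 'M[R]_n => \tr M = 0)); first exact: mxtrace0.
    by move=> ? ? h1 h2; rewrite mxtraceD h1 h2 addr0.
  by move=> i _; exact: tr_comm.
have [dA HA] := phi_spec r0 Ht.
pose F i := X i *m Y (r - i)%N - Y (r - i)%N *m X i.
have K : forall s, (forall i, i \in s -> (0 < i < r)%N) ->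
    \det (\big[mulmx/1%:M]_(i <- s) gcomm (phi p X i) (phi p Y (r - i)%N)) = 1 /\
    lv r (\big[mulmx/1%:M]_(i <- s) gcomm (phi p X i) (phi p Y (r - i)%N))
         (\sum_(i <- s) F i).
  elim=> [|i s IH] Hs; first by rewrite !big_nil; split; [exact: det1 | exact: lev_one].
  have [Hi Hs'] : (0 < i < r)%N /\ (forall j, j \in s -> (0 < j < r)%N).
    split; [apply: Hs; exact: mem_head | move=> j js; apply: Hs; by rewrite inE js orbT].
  have [d1 l1] := IH Hs'.
  case/andP: Hi => i0' ir.
  have ri0 : (0 < r - i)%N by rewrite subn_gt0.
  have [dx hx] := phi_spec i0' (HtX i).
  have [dy hy] := phi_spec ri0 (HtY (r - i)%N).
  rewrite !big_cons; split; first by rewrite det_mulmx d1 det_gcomm // mulr1.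
  apply: lev_mul => //.
  have := lev_comm i0' ri0 dx dy hx hy; rewrite subnKC //; exact: ltnW.
have [|dP HP] := K (index_iota 1 r); first by move=> i; rewrite mem_index_iota.
apply: lev_gr dA dP _ HP.
apply: lev_congr HA; rewrite /L_bracket big_ltn // big_nat_recr //= subnn subn0.
move/mxcP: X0 => X0; move/mxcP: Y0 => Y0.
apply: mxc_sandwich; [exact: mxc_comm0r | exact: mxc_comm0l].
Qed.

Lemma part5 X Y : L_elt p X -> L_elt p Y -> gr_eq p (phi p X) (phi p Y) -> L_eq p X Y.
Proof.
move=> [X0 [HtX _]] [Y0 [HtY _]] E r.
case: r => [|r].
  move/mxcP: X0 => X0; move/mxcP: Y0 => Y0.
  apply/mxcP; exact: mxc_trans X0 (mxc_sym Y0).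
have r0 : (0 < r.+1)%N by [].
have [dA HA] := phi_spec r0 (HtX r.+1); have [dB HB] := phi_spec r0 (HtY r.+1).
have H := (key_gamma p r.+2 dA dB).1 (E r.+1 r0).
apply/mxcP; apply: (cancel_q tf (r := r.+1)); apply: (mxc_addK (C := 1%:M)).
exact: mxc_trans (mxc_sym HA) (mxc_trans H HB).
Qed.

Lemma part6 a : gr_elt p a -> exists X, L_elt p X /\ gr_eq p (phi p X) a.
Proof.
move=> [Ha [N HN]].
pose X r := if r == 0%N then 0 else epsilon (inhabits 0) (fun C : 'M[R]_n => a r = 1%:M + Q r *: C).
have HX : forall r, (0 < r)%N -> a r = 1%:M + Q r *: X r.
  move=> r r0; rewrite /X; have -> : (r == 0%N) = false by case: r r0.
  apply: (epsilon_spec (inhabits 0) (fun C : 'M[R]_n => a r = 1%:M + Q r *: C)).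
  have [C HC] := gamma_mxc (Ha r r0); exists C.
  by rewrite -HC addrC subrK.
have Ht : forall r, congr_mod p%:R (\tr (X r)) 0.
  case=> [|r]; first by rewrite /X eqxx mxtrace0; exists 0; rewrite subr0 mulr0.
  apply: (trace_cond tf (r := r.+1)) => //; rewrite -HX //; exact: (Ha r.+1 _).1.
exists X; split.
  split; first by apply/mxcP; rewrite /X eqxx; exact: mxc_refl.
  split => //; exists N.+1 => r Nr.
  have r0 : (0 < r)%N by apply: leq_trans Nr.
  have G := gamma_mxc (HN r (ltnW Nr)); rewrite (HX r r0) in G.
  apply/mxcP; apply: (cancel_q tf (r := r)); rewrite scaler0.
  apply: (mxc_addK (C := 1%:M)); rewrite addr0; exact: G.
move=> r r0; have [dA HA] := phi_spec r0 (Ht r).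
apply: lev_gr dA (Ha r r0).1 HA _.
rewrite /lev {1}(HX r r0); exact: mxc_refl.
Qed.

End Final.

Theorem theorem2p4 (R : comPzRingType) (I : eqType) (v : I -> R) (n p : nat) :
  Z_basis v -> (2 <= n)%N -> prime p ->
  exists phi : (nat -> 'M[R]_n) -> (nat -> 'M[R]_n), Lie_iso_L_gr p phi.
Proof.
move=> hv n2 pp.
have tf := torsion_free hv (prime_gt0 pp).
have n0 : (0 < n)%N by apply: leq_trans n2.
pose i0 : 'I_n := Ordinal n0.
exists (phi p); split; first exact: part1 i0.
split; first exact: part2 i0.
split; first exact: part3 i0.
split; first exact: part4 i0.
split; first exact: part5 tf i0.
exact: part6 tf i0.
Qed.
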